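(* Let $p_t$, $t\in[0,1]$, be the marginals of the forward CTMC with rates $Q_t$ started from the data distribution $p_0$, and let $p^\theta_t$ be the marginals of the learned reverse process started at time $1$ from the reference distribution $p^\theta_1=p_r$. Then $$D_{KL}(p_0\,\|\,p_0^\theta)\le \int_0^1\mathbb{E}_{x_t\sim p_t}\sum_{y\neq x_t}Q_t(x_t,y)\,\ell\!\left(\frac{p_t(y)}{p_t(x_t)},\,s_\theta(x_t,t)_y\right)dt + D_{KL}(p_1\,\|\,p_r).$$
   Context: Finite state space $\mathcal{X}$; $(Q_t)_{t\in[0,1]}$ transition-rate matrices (nonnegative off-diagonal entries, columns summing to zero, $Q_t(x,y)$ for $x\ne y$ is the rate of jumping from $y$ to $x$). The forward process has marginals $p_t$ solving $\frac{d}{dt}p_t=Q_tp_t$ from the data distribution $p_0$. The true reverse process runs from $t=1$ to $t=0$, starts from $p_1$, and jumps from $x$ to $y\neq x$ at time $t$ with rate $Q_t(x,y)\,p_t(y)/p_t(x)$; its marginals are $p_t$. A model $s_\theta(x,t)_y>0$ ($x\ne y$) approximates the ratios $p_t(y)/p_t(x)$; the learned reverse process runs from $t=1$ to $t=0$, starts from a reference distribution $p_r$, and jumps from $x$ to $y\neq x$ at rate $Q_t(x,y)\,s_\theta(x,t)_y$; its marginals are denoted $p^\theta_t$ (so $p^\theta_1=p_r$, and $p^\theta_0$ is the learned data distribution). $K(a)=a(\log a-1)$ with $K(0)=0$, $\ell(a,b)=b-a\log b+K(a)$. All quantities are assumed regular enough for the integrals to be defined. *)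

(* Defs.v *)
From HB Require Import structures.
From mathcomp Require Import all_boot all_order all_algebra.
From mathcomp Require Import all_classical all_reals all_analysis.
Set Implicit Arguments. Unset Strict Implicit. Unset Printing Implicit Defensive.
Import Order.TTheory GRing.Theory Num.Theory.
Import numFieldNormedType.Exports.
Local Open Scope ring_scope.
Local Open Scope classical_set_scope.

Definition Kfun {R : realType} (a : R) : R := if a == 0 then 0 else a * (ln a - 1).

Definition ell {R : realType} (a b : R) : R := b - a * ln b + Kfun a.

Definition KL {R : realType} {X : finType} (p q : X -> R) : R :=
  \sum_(x : X) (if p x == 0 then 0 else p x * ln (p x / q x)).

Definition is_distr {R : realType} {X : finType} (p : X -> R) : Prop :=
  (forall x, 0 <= p x) /\ \sum_(x : X) p x = 1.

(* a transition-rate matrix: Q x y (x <> y) is the rate of jumping from y to x;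
   off-diagonal entries nonnegative, columns sum to zero *)
Definition is_rate_matrix {R : realType} {X : finType} (Q : X -> X -> R) : Prop :=
  (forall x y, x != y -> 0 <= Q x y) /\ (forall y, \sum_(x : X) Q x y = 0).

Definition dse_integrand {R : realType} {X : finType}
  (Q : R -> X -> X -> R) (p : R -> X -> R) (s : X -> R -> X -> R) (t : R) : R :=
  \sum_(x : X) p t x *
     \sum_(y : X | y != x) Q t x y * ell (p t y / p t x) (s x t y).

(* Main.v *)
Require Import Defs.
From HB Require Import structures.
From mathcomp Require Import all_boot all_order all_algebra.
From mathcomp Require Import all_classical all_reals all_analysis.
From mathcomp Require Import ring lra.
Import Order.TTheory GRing.Theory Num.Theory.
Import numFieldNormedType.Exports.
Local Open Scope ring_scope.
Local Open Scope classical_set_scope.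


Lemma KfunE (R : realType) (a : R) : Kfun a = a * (ln a - 1).
Proof. by rewrite /Kfun; case: eqP => [->|//]; rewrite mul0r. Qed.

Lemma ln_le_sub1 {R : realType} {c : R} : 0 < c -> ln c <= c - 1.
Proof.
move=> c0; have := @le_ln1Dx R (c - 1); rewrite addrCA subrr addr0; apply.
lra.
Qed.

Lemma ln_divE {R : realType} (a b : R) : 0 < a -> 0 < b -> ln (a / b) = ln a - ln b.
Proof. by move=> a0 b0; rewrite ln_div// posrE. Qed.

Lemma ln_MulE {R : realType} (a b : R) : 0 < a -> 0 < b -> ln (a * b) = ln a + ln b.
Proof. by move=> a0 b0; rewrite lnM// posrE. Qed.

Lemma ell_ge0 (R : realType) (a b : R) : 0 <= a -> 0 < b -> 0 <= ell a b.
Proof.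
move=> a0 b0; rewrite /ell KfunE.
have [->|ap] := eqVneq a 0; first by rewrite !mul0r subr0 addr0 ltW.
have a1 : 0 < a by rewrite lt_def ap.
have := ln_le_sub1 (divr_gt0 b0 a1); rewrite ln_divE// => h.
have : 0 <= a * (b / a - 1 - (ln b - ln a)) by apply: mulr_ge0; [exact: ltW|lra].
suff -> : a * (b / a - 1 - (ln b - ln a)) = b - a * ln b + a * (ln a - 1) by [].
by field; rewrite ap.
Qed.

Lemma in_setitv (R : realType) (t : R) (i : interval R) : (t \in [set` i]) = (t \in i).
Proof. by apply/idP/idP => [/set_mem|h] //; apply/mem_set. Qed.


Lemma swap_sum (R : realType) (X : finType) (g : X -> X -> R) :
  \sum_(x : X) \sum_(y : X | y != x) g x y = \sum_(x : X) \sum_(y : X | y != x) g y x.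
Proof.
under eq_bigr do rewrite big_mkcond.
rewrite exchange_big /=; apply: eq_bigr => y _; rewrite [RHS]big_mkcond.
by apply: eq_bigr => x _; rewrite eq_sym.
Qed.

Lemma rowsum (R : realType) (X : finType) (Q : X -> X -> R) (P : X -> R) x :
  (forall y, \sum_(z : X) Q z y = 0) ->
  \sum_(y : X) Q x y * P y = \sum_(y : X | y != x) (Q x y * P y - Q y x * P x).
Proof.
move=> cs; rewrite (bigD1 x)//= addrC sumrB -big_distrl /=; congr (_ + _).
have := cs x; rewrite (bigD1 x)//= => /eqP; rewrite addr_eq0 => /eqP ->.
by rewrite mulNr.
Qed.

Lemma key_ineq (R : realType) (X : finType) (Q : X -> X -> R) (P q : X -> R)
  (S : X -> X -> R) :
  (forall x y, x != y -> 0 <= Q x y) -> (forall y, \sum_(x : X) Q x y = 0) ->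
  (forall x, 0 < P x) -> (forall x, 0 < q x) ->
  (forall x y, x != y -> 0 < S x y) ->
  0 <= \sum_(x : X) ((\sum_(y : X) Q x y * P y) * ln (P x / q x) + (\sum_(y : X) Q x y * P y)
          - P x * (- \sum_(y : X | y != x) (Q y x * S y x * q y - Q x y * S x y * q x)) / q x)
     + \sum_(x : X) P x * \sum_(y : X | y != x) Q x y * ell (P y / P x) (S x y).
Proof.
move=> Qge0 cs P0 q0 S0.
pose L x := ln (P x / q x).
pose U x y := Q x y * P y * L x + Q x y * P y - P x / q x * (Q x y * S x y * q x)
   + P x * (Q x y * ell (P y / P x) (S x y)).
pose W x y := - (Q x y * P y * L y) - Q x y * P y + P y / q y * (Q x y * S x y * q x).
have step : forall x,
   (\sum_(y : X) Q x y * P y) * ln (P x / q x) + (\sum_(y : X) Q x y * P y)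
     - P x * (- \sum_(y : X | y != x) (Q y x * S y x * q y - Q x y * S x y * q x)) / q x
   + P x * \sum_(y : X | y != x) Q x y * ell (P y / P x) (S x y)
   = \sum_(y : X | y != x) (U x y + W y x).
  move=> x; rewrite rowsum//.
  have -> : P x * (- \sum_(y : X | y != x) (Q y x * S y x * q y - Q x y * S x y * q x)) / q x
     = \sum_(y : X | y != x) (- (P x / q x) * (Q y x * S y x * q y - Q x y * S x y * q x)).
    by rewrite -big_distrr /=; ring.
  rewrite big_distrl /= big_distrr /= -big_split /= -sumrB -big_split /=.
  by apply: eq_bigr => y _; rewrite /U /W /L; ring.
rewrite -big_split /=.
rewrite (eq_bigr _ (fun x _ => step x)).
under eq_bigr do rewrite big_split /=.
rewrite big_split /= [X in _ + X]swap_sum -big_split /=.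
under eq_bigr do rewrite -big_split /=.
apply: sumr_ge0 => x _; apply: sumr_ge0 => y yx.
have xy : x != y by rewrite eq_sym.
have Px := P0 x; have Py := P0 y; have qx := q0 x; have qy := q0 y.
have Sxy := S0 _ _ xy.
pose c := S x y * q x / q y.
have c0 : 0 < c by rewrite /c divr_gt0// mulr_gt0.
have -> : U x y + W x y = Q x y * (P y * (c - 1 - ln c)).
  rewrite /U /W /L /ell KfunE /c.
  rewrite !ln_divE ?mulr_gt0 ?divr_gt0// ln_MulE//.
  by field; rewrite !gt_eqF.
apply: mulr_ge0; first exact: Qge0.
apply: mulr_ge0; first exact: ltW.
by have := ln_le_sub1 c0; lra.
Qed.


Lemma is_derive_xlog (R : realType) (a b : R -> R) (t da db : R) :
  0 < a t -> 0 < b t -> is_derive t 1 a da -> is_derive t 1 b db ->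
  is_derive t 1 (fun u => a u * ln (a u / b u))
    (da * ln (a t / b t) + da - a t * db / b t).
Proof.
move=> a0 b0 ha hb.
have hbV : is_derive t 1 (fun u => (b u)^-1) (- (b t) ^- 2 *: db).
  by apply: is_deriveV => //; rewrite gt_eqF.
have hab : is_derive t 1 (a * (fun u => (b u)^-1))
    (a t *: (- (b t) ^- 2 *: db) + (b t)^-1 *: da).
  exact: is_deriveM.
have hln : is_derive t 1 ((@ln R) \o (a * (fun u => (b u)^-1)))
    ((a t / b t)^-1 * (a t *: (- (b t) ^- 2 *: db) + (b t)^-1 *: da)).
  apply: is_derive1_comp => //.
  by apply: is_derive1_ln; rewrite divr_gt0.
have -> : (fun u => a u * ln (a u / b u)) = a * ((@ln R) \o (a * (fun u => (b u)^-1))).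
  by apply/funext.
apply: is_derive_eq (is_deriveM ha hln) _.
rewrite /= /GRing.scale /=.
by field; rewrite !gt_eqF.
Qed.

Lemma is_derive_sum_seq (R : realType) (I : Type) (r : seq I)
  (h : I -> R -> R) (dh : I -> R) (t : R) :
  (forall i, is_derive t 1 (h i) (dh i)) ->
  is_derive t 1 (fun u => \sum_(i <- r) h i u) (\sum_(i <- r) dh i).
Proof.
move=> H; elim: r => [|i r IH].
  have -> : (fun u : R => \sum_(i <- [::]) h i u) = cst 0.
    by apply/funext => u; rewrite big_nil.
  by rewrite big_nil; exact: is_derive_cst.
have -> : (fun u : R => \sum_(j <- i :: r) h j u) =
   h i + (fun u => \sum_(j <- r) h j u).
  by apply/funext => u; rewrite big_cons.
by rewrite big_cons; exact: is_deriveD.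
Qed.


Lemma xlnx_bound {R : realType} {a : R} : 0 < a -> a <= 1 ->
  - (2 * Num.sqrt a) <= a * ln a <= 0.
Proof.
move=> a0 a1; apply/andP; split; last first.
  by apply: mulr_ge0_le0; [exact: ltW|exact: ln_le0].
set r := Num.sqrt a.
have r0 : 0 < r by rewrite sqrtr_gt0.
have ar : a = r * r by rewrite -expr2 sqr_sqrtr// ltW.
have lnr : 1 - r^-1 <= ln r.
  have ri : 0 < r^-1 by rewrite invr_gt0.
  have := ln_le_sub1 ri.
  by rewrite lnV ?posrE//; lra.
have lnr' : r - 1 <= r * ln r.
  have := ler_wpM2l (ltW r0) lnr.
  by rewrite mulrBr mulr1 mulfV ?gt_eqF.
rewrite ar ln_MulE//.
nra.
Qed.

Lemma xlnx_cont0 {R : realType} : a * ln a @[a --> (0:R)] --> (0:R).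
Proof.
apply: (@squeeze_cvgr _ _ _ _ (fun a : R => - (2 * Num.sqrt `|a|))
   (fun a : R => 2 * Num.sqrt `|a|)).
- near=> a.
  have a1 : `|a| < 1 by near: a; exists 1 => //= z /=; rewrite sub0r normrN.
  have [a0|a0] := leP a 0.
    rewrite ln0// mulr0 oppr_le0 andbC mulr_ge0 ?sqrtr_ge0//.
  rewrite gtr0_norm//.
  have a1' : a <= 1 by rewrite -(gtr0_norm a0) ltW.
  have /andP[h1 h2] := xlnx_bound a0 a1'.
  rewrite h1 /= (le_trans h2)// mulr_ge0// sqrtr_ge0.
- have hc : continuous (fun a : R => 2 * Num.sqrt `|a|).
    move=> x; apply: cvgMl_tmp.
    apply: (@continuous_comp _ _ _ (@Num.norm _ R) (@Num.sqrt R)); [exact: (@norm_continuous _ R^o)|exact: sqrt_continuous].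
  have := cvgN (hc 0); rewrite /= normr0 sqrtr0 mulr0 oppr0; apply; exact: nbhs_filter.
- have hc : continuous (fun a : R => 2 * Num.sqrt `|a|).
    move=> x; apply: cvgMl_tmp.
    apply: (@continuous_comp _ _ _ (@Num.norm _ R) (@Num.sqrt R)); [exact: (@norm_continuous _ R^o)|exact: sqrt_continuous].
  have h0 : (fun a : R => 2 * Num.sqrt `|a|) @ (0:R) --> 2 * Num.sqrt `|0:R| := hc 0.
  by rewrite normr0 sqrtr0 mulr0 in h0.
Unshelve. all: by end_near. Qed.

Lemma cvg_lnc {R : realType} {T : Type} {F : set_system T} {FF : Filter F}
  (a : T -> R) (a0 : R) : 0 < a0 -> a @ F --> a0 -> (fun z => ln (a z)) @ F --> ln a0.
Proof. by move=> a0p ha; have h := cvg_comp a (@ln R) ha (continuous_ln a0p); exact: h. Qed.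

Lemma xlnx_cont {R : realType} {a0 : R} : 0 <= a0 ->
  (fun a : R => a * ln a) @ a0 --> a0 * ln a0.
Proof.
rewrite le_eqVlt => /predU1P[<-|a0p]; first by rewrite mul0r; exact: xlnx_cont0.
apply: cvgM; first exact: cvg_id.
exact: continuous_ln.
Qed.

Lemma xlog_split {R : realType} (a b : R) : 0 <= a -> 0 < b ->
  a * ln (a / b) = a * ln a - a * ln b.
Proof.
rewrite le_eqVlt => /predU1P[<-|a0] b0; first by rewrite !mul0r subrr.
by rewrite ln_divE// mulrBr.
Qed.

Lemma cvg_xlog {R : realType} {T : Type} {F : set_system T} {FF : Filter F}
  (a b : T -> R) (a0 b0 : R) : 0 <= a0 -> 0 < b0 ->
  (\forall z \near F, 0 <= a z) -> a @ F --> a0 -> b @ F --> b0 ->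
  (fun z => a z * ln (a z / b z)) @ F --> a0 * ln (a0 / b0).
Proof.
move=> a0p b0p anear ha hb.
have bnear := cvgr_gt b0 hb 0 b0p.
have E : {near F, (fun z => a z * ln (a z) - a z * ln (b z)) =1
   (fun z => a z * ln (a z / b z))}.
  near=> z.
  have az : 0 <= a z by near: z; exact: anear.
  have bz : 0 < b z by near: z; exact: bnear.
  by rewrite /= xlog_split.
apply: cvg_trans (near_eq_cvg E) _.
rewrite xlog_split//.
apply: cvgB.
  by have h := cvg_comp a (fun u => u * ln u) ha (xlnx_cont a0p); exact: h.
apply: cvgM => //.
exact: cvg_lnc.
Unshelve. all: by end_near. Qed.

Lemma cvg_ell {R : realType} {T : Type} {F : set_system T} {FF : Filter F}
  (a b : T -> R) (a0 b0 : R) : 0 < a0 -> 0 < b0 ->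
  a @ F --> a0 -> b @ F --> b0 ->
  (fun z => ell (a z) (b z)) @ F --> ell a0 b0.
Proof.
move=> a0p b0p ha hb; rewrite /ell KfunE.
under eq_cvg do rewrite KfunE.
apply: cvgD; first apply: cvgB => //.
  by apply: cvgM => //; exact: cvg_lnc.
apply: cvgM => //; apply: cvgB; first exact: cvg_lnc.
exact: cvg_cst.
Qed.

Lemma cvg_sum_seq {R : realType} {T : Type} {F : set_system T} {FF : Filter F}
  (I : Type) (r : seq I) (P : pred I) (h : I -> T -> R) (l : I -> R) :
  (forall i, P i -> h i @ F --> l i) ->
  (fun z => \sum_(i <- r | P i) h i z) @ F --> \sum_(i <- r | P i) l i.
Proof.
move=> H; elim: r => [|i r IH].
  rewrite big_nil; under eq_cvg do rewrite big_nil; exact: cvg_cst.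
rewrite big_cons; under eq_cvg do rewrite big_cons.
case: ifPn => Pi //.
by apply: cvgD => //; exact: H.
Qed.

Theorem theorem1 (R : realType) (X : finType)
  (Q : R -> X -> X -> R) (p : R -> X -> R) (s : X -> R -> X -> R)
  (ptheta : R -> X -> R) (pr : X -> R) :
  (* rate matrices, continuous in time *)
  (forall t : R, t \in `[0%R, 1%R] -> is_rate_matrix (Q t)) ->
  (forall x y, {within `[0%R, 1%R], continuous (fun t => Q t x y)}) ->
  (* model: positive, continuous in time *)
  (forall (x y : X) (t : R), x != y -> 0 < s x t y) ->
  (forall x y, {within `[0%R, 1%R], continuous (fun t => s x t y)}) ->
  (* forward process: marginals p_t from the data distribution p_0, dp_t/dt = Q_t p_t *)
  is_distr (p 0) ->
  (forall x, {within `[0%R, 1%R], continuous (fun t => p t x)}) ->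
  (forall (t : R) (x : X), t \in `]0%R, 1%R[ ->
     is_derive t 1 (fun u => p u x) (\sum_(y : X) Q t x y * p t y)) ->
  (* regularity: forward marginals positive for t > 0 *)
  (forall (t : R) (x : X), t \in `]0%R, 1%R] -> 0 < p t x) ->
  (* learned reverse process: started at time 1 from p_r, jumps x -> y at rate
     Q_t(x,y) s(x,t)_y; its marginals solve the (time-reversed) Kolmogorov equation *)
  is_distr pr -> (forall x, 0 < pr x) ->
  ptheta 1 = pr ->
  (forall x, {within `[0%R, 1%R], continuous (fun t => ptheta t x)}) ->
  (forall (t : R) (x : X), t \in `]0%R, 1%R[ ->
     is_derive t 1 (fun u => ptheta u x)
       (- \sum_(y : X | y != x)
            (Q t y x * s y t x * ptheta t y - Q t x y * s x t y * ptheta t x))) ->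
  (* regularity: learned marginals positive *)
  (forall (t : R) (x : X), t \in `[0%R, 1%R] -> 0 < ptheta t x) ->
  ((KL (p 0) (ptheta 0))%:E <=
     (\int[lebesgue_measure]_(t in `[0%R, 1%R]) (dse_integrand Q p s t)%:E)
     + (KL (p 1) pr)%:E)%E.
Proof.
move=> hQ hQc hs hsc hp0 hpc hpd hppos hpr hprpos hq1 hqc hqd hqpos.
pose f := dse_integrand Q p s.
pose KLf := fun t => \sum_(x : X) p t x * ln (p t x / ptheta t x).
have KLE : forall t, KL (p t) (ptheta t) = KLf t.
  move=> t; rewrite /KL /KLf; apply: eq_bigr => x _.
  by case: eqP => // ->; rewrite mul0r.
have oo_cc : forall t : R, t \in `]0, 1[ -> t \in `[0, 1].
  by move=> t; rewrite !in_setitv !in_itv /= => /andP[a b]; rewrite !ltW.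
have oo_oc : forall t : R, t \in `]0, 1[ -> t \in `]0, 1].
  by move=> t; rewrite !in_setitv !in_itv /= => /andP[a b]; rewrite a ltW.
have hpge0 : forall (t : R) x, t \in `[0, 1] -> 0 <= p t x.
  move=> t x; rewrite in_setitv in_itv /= => /andP[t0 t1].
  have [->|tn0] := eqVneq t 0; first exact: hp0.1.
  by apply/ltW/hppos; rewrite in_setitv in_itv /= t1 andbT lt_def tn0.
have f_ge0 : forall t : R, t \in `[0, 1] -> 0 <= f t.
  move=> t tin; rewrite /f /dse_integrand; apply: sumr_ge0 => x _.
  have [->|px] := eqVneq (p t x) 0; first by rewrite mul0r.
  have px0 : 0 < p t x by rewrite lt_def px hpge0.
  apply: mulr_ge0; first exact: ltW.
  apply: sumr_ge0 => y yx; apply: mulr_ge0.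
    by apply: (hQ t tin).1; rewrite eq_sym.
  apply: ell_ge0; first by rewrite divr_ge0 ?hpge0 ?ltW.
  by apply: hs; rewrite eq_sym.
have pc : forall x t, t \in `]0, 1[ -> {for t, continuous (fun u => p u x)}.
  move=> x t tin; apply: (within_continuous_continuous ltr01 (hpc x)).
  by rewrite in_setitv in tin.
have qc : forall x t, t \in `]0, 1[ -> {for t, continuous (fun u => ptheta u x)}.
  move=> x t tin; apply: (within_continuous_continuous ltr01 (hqc x)).
  by rewrite in_setitv in tin.
have Qc : forall x y t, t \in `]0, 1[ -> {for t, continuous (fun u => Q u x y)}.
  move=> x y t tin; apply: (within_continuous_continuous ltr01 (hQc x y)).
  by rewrite in_setitv in tin.
have sc : forall x y t, t \in `]0, 1[ -> {for t, continuous (fun u => s x u y)}.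
  move=> x y t tin; apply: (within_continuous_continuous ltr01 (hsc x y)).
  by rewrite in_setitv in tin.
have fcont : forall t : R, t \in `]0, 1[ -> {for t, continuous f}.
  move=> t tin; rewrite /prop_for /continuous_at /f /dse_integrand.
  apply: cvg_sum_seq => x _; apply: cvgM; first exact: pc.
  apply: cvg_sum_seq => y yx; apply: cvgM; first exact: Qc.
  have ptx := hppos t x (oo_oc t tin).
  have pty := hppos t y (oo_oc t tin).
  apply: cvg_ell.
  - by rewrite divr_gt0.
  - by apply: hs; rewrite eq_sym.
  - apply: cvgM; first exact: pc.
    by apply: cvgV; [rewrite gt_eqF|exact: pc].
  - exact: sc.
pose Dt t := \sum_(x : X) ((\sum_(y : X) Q t x y * p t y) * ln (p t x / ptheta t x)
   + (\sum_(y : X) Q t x y * p t y)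
   - p t x * (- \sum_(y : X | y != x) (Q t y x * s y t x * ptheta t y
        - Q t x y * s x t y * ptheta t x)) / ptheta t x).
have KLd : forall t : R, t \in `]0, 1[ -> is_derive t 1 KLf (Dt t).
  move=> t tin; apply: is_derive_sum_seq => x.
  apply: is_derive_xlog; [exact: hppos (oo_oc t tin)|exact: hqpos (oo_cc t tin)|
    exact: hpd|exact: hqd].
have key : forall t : R, t \in `]0, 1[ -> 0 <= Dt t + f t.
  move=> t tin; apply: (@key_ineq R X (Q t) (fun x => p t x)
     (fun x => ptheta t x) (fun x y => s x t y)).
  - exact: (hQ t (oo_cc t tin)).1.
  - exact: (hQ t (oo_cc t tin)).2.
  - by move=> x; exact: hppos (oo_oc t tin).
  - by move=> x; exact: hqpos (oo_cc t tin).
  - by move=> x y; exact: hs.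
have mf : measurable_fun `[(0:R), 1] f.
  apply: (@measurable_realfun.measurable_fun_itv_cc _ 0 1 false true).
  apply: measurable_realfun.open_continuous_measurable_fun; first exact: interval_open.
  by move=> t tin; exact: fcont.
have KLcont : {within `[(0:R), 1], continuous KLf}.
  apply/subspace_continuousP => t0 t0in.
  apply: cvg_sum_seq => x _.
  apply: cvg_xlog.
  - exact: hpge0 (mem_set t0in).
  - exact: hqpos (mem_set t0in).
  - by apply: filterS (withinT _ _) => z zin; exact: hpge0 (mem_set zin).
  - exact: ((subspace_continuousP _ _).1 (hpc x) t0 t0in).
  - exact: ((subspace_continuousP _ _).1 (hqc x) t0 t0in).
pose I := (\int[lebesgue_measure]_(t in `[0%R, 1%R]) (dse_integrand Q p s t)%:E)%E.
rewrite -/I.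
have I0 : (0 <= I)%E.
  by apply: integral_ge0 => t tin; rewrite lee_fin; apply: f_ge0; exact: mem_set.
have [[r Ir]|Iinf] : (exists r, I = r%:E) \/ I = +oo%E.
  by move: I0; case: I => [r _|_|//]; [left; exists r|right].
  2: by rewrite Iinf addye// leey.
have intf : lebesgue_measure.-integrable `[(0:R), 1] (EFin \o f).
  apply/integrableP; split; first exact/measurable_realfun.measurable_EFinP.
  have -> : (\int[lebesgue_measure]_(x in `[0%R, 1%R]) `|(EFin \o f) x|)%E = I.
    rewrite /I; apply: eq_integral => t tin.
    by rewrite /= ger0_norm// f_ge0.
  by rewrite Ir ltey.
pose Fint := fun x : R => parameterized_integral lebesgue_measure 0 x f.
pose Hf := KLf + Fint.
have Hcont : {within `[(0:R), 1], continuous Hf}.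
  apply: within_continuousD => //.
  exact: (parameterized_integral_continuous ler01 intf).
have Hd : forall t : R, t \in `]0, 1[%R -> derivable Hf t 1 /\ 0 <= Hf^`() t.
  move=> t tin.
  have tin' : t \in `]0, 1[ by rewrite in_setitv.
  move: (tin); rewrite in_itv /= => /andP[t0 t1].
  have [dF F'] := continuous_FTC1_closed t1 intf t0 (fcont t tin').
  have [dK K'] := KLd t tin'.
  split; first exact: derivableD.
  rewrite derive1E deriveD// K' -derive1E F'.
  exact: key.
have := ger0_derive1_ndecr (fun t tin => (Hd t tin).1) (fun t tin => (Hd t tin).2)
   Hcont (lexx 0) ler01 (lexx 1).
have HfE : forall y, Hf y = KLf y + Fint y by [].
rewrite !HfE /Fint /parameterized_integral set_itv1 Rintegral_set1 addr0.
rewrite /Rintegral -/I Ir /= -hq1 !KLE => h.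
by rewrite -EFinD lee_fin addrC.
Qed.
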